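(* Let $\langle A;\cdot\rangle$ be a semigroup satisfying condition $( * )$. Then $\langle A;\cdot\rangle$ is an Abelian algebra if and only if $\langle A;\cdot\rangle$ is an inflation of a subsemigroup which is semisimple and is an Abelian algebra.
   Context: $A\cdot A=\{xy\mid x,y\in A\}$. Condition $( * )$: either ($bcA=bA$ and $Abc=Ac$ for all $b,c\in A$), or the set $A\cdot A$ is finite. A semigroup is semisimple if each of its principal factors is simple or $0$-simple. A semigroup $\langle A;\cdot\rangle$ is an inflation of a subsemigroup $\langle B;\cdot\rangle$ if there is a partition $\{X_b\mid b\in B\}$ of $A$ with $b\in X_b$ and $x\cdot y=a\cdot b$ for all $a,b\in B$, $x\in X_a$, $y\in X_b$. A polynomial operation of an algebra is an operation obtained from a term by substituting elements of the algebra for some of its variables. An algebra is called Abelian if for every polynomial operation $t(x,y_1,\ldots,y_n)$ and all elements $u,v,c_1,\ldots,c_n,d_1,\ldots,d_n$ of the algebra, $t(u,c_1,\ldots,c_n)=t(u,d_1,\ldots,d_n)$ implies $t(v,c_1,\ldots,c_n)=t(v,d_1,\ldots,d_n)$. *)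

(* Defs.v *)
From Stdlib Require Import List ClassicalEpsilon.

Section Semigroups.
Context {T : Type}.

(* Terms over the signature {.} with variables indexed by nat and constants
   from the algebra: these are exactly the polynomial operations. *)
Inductive pterm : Type :=
| PVar (n : nat)
| PConst (c : T)
| PMul (t1 t2 : pterm).

Fixpoint peval (mul : T -> T -> T) (e : nat -> T) (t : pterm) : T :=
  match t with
  | PVar n => e n
  | PConst c => c
  | PMul t1 t2 => mul (peval mul e t1) (peval mul e t2)
  end.

Fixpoint consts_in (P : T -> Prop) (t : pterm) : Prop :=
  match t with
  | PVar _ => True
  | PConst c => P c
  | PMul t1 t2 => consts_in P t1 /\ consts_in P t2
  end.

(* environment: variable 0 is x, variable (S i) is y_(i+1) *)
Definition scons (u : T) (c : nat -> T) : nat -> T :=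
  fun n => match n with O => u | S k => c k end.

Definition abelian_in (P : T -> Prop) (mul : T -> T -> T) : Prop :=
  forall (t : pterm), consts_in P t ->
  forall (u v : T) (c d : nat -> T),
    P u -> P v -> (forall n, P (c n)) -> (forall n, P (d n)) ->
    peval mul (scons u c) t = peval mul (scons u d) t ->
    peval mul (scons v c) t = peval mul (scons v d) t.

Definition ideal_in (P : T -> Prop) (mul : T -> T -> T) (K : T -> Prop) : Prop :=
  (exists k, K k) /\ (forall k, K k -> P k) /\
  (forall s k, P s -> K k -> K (mul s k) /\ K (mul k s)).

Definition simple_in (P : T -> Prop) (mul : T -> T -> T) : Prop :=
  forall K, ideal_in P mul K -> forall x, P x -> K x.

Definition zero_simple_in (P : T -> Prop) (mul : T -> T -> T) : Prop :=
  exists z, P z /\ (forall x, P x -> mul z x = z /\ mul x z = z) /\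
  (exists x y, P x /\ P y /\ mul x y <> z) /\
  (forall K, ideal_in P mul K ->
     (forall x, K x <-> x = z) \/ (forall x, P x -> K x)).

End Semigroups.

Arguments pterm : clear implicits.

Section Principal.
Context {A : Type} (mul : A -> A -> A) (B : A -> Prop).

(* principal two-sided ideal J(a) = B^1 a B^1 inside the semigroup B *)
Definition Jideal (a : A) : A -> Prop := fun x =>
  B x /\ (x = a \/ (exists s, B s /\ x = mul s a) \/ (exists t, B t /\ x = mul a t)
          \/ (exists s t, B s /\ B t /\ x = mul (mul s a) t)).

Definition Jclass (a : A) : A -> Prop := fun x =>
  B x /\ forall y, Jideal a y <-> Jideal x y.

Definition Iideal (a : A) : A -> Prop := fun x => Jideal a x /\ ~ Jclass a x.

(* Rees quotient J(a)/I(a): carrier J_a together with a new zero None *)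
Definition rees_carrier (a : A) : option A -> Prop := fun o =>
  match o with None => True | Some x => Jclass a x end.

Definition rees_mul (a : A) (o1 o2 : option A) : option A :=
  match o1, o2 with
  | Some x, Some y =>
      if excluded_middle_informative (Jclass a (mul x y))
      then Some (mul x y) else None
  | _, _ => None
  end.

(* the principal factor of a (a in B) is simple or 0-simple:
   it is J(a) if I(a) is empty, and the Rees quotient J(a)/I(a) otherwise *)
Definition principal_factor_ok (a : A) : Prop :=
  ((forall x, ~ Iideal a x) ->
     simple_in (Jideal a) mul \/ zero_simple_in (Jideal a) mul) /\
  ((exists x, Iideal a x) ->
     simple_in (rees_carrier a) (rees_mul a) \/
     zero_simple_in (rees_carrier a) (rees_mul a)).

Definition semisimple_in : Prop := forall a, B a -> principal_factor_ok a.

Definition subsemigroup : Prop := forall x y, B x -> B y -> B (mul x y).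

(* <A;.> is an inflation of <B;.>: a partition {X_b | b in B} of A with
   b in X_b and x y = a b for x in X_a, y in X_b *)
Definition inflation_of : Prop :=
  exists X : A -> A -> Prop,
    (forall b x, X b x -> B b) /\
    (forall x, exists! b, B b /\ X b x) /\
    (forall b, B b -> X b b) /\
    (forall a b x y, B a -> B b -> X a x -> X b y -> mul x y = mul a b).

End Principal.

Definition condition_star {A : Type} (mul : A -> A -> A) : Prop :=
  (forall b c : A,
     (forall y, (exists x, y = mul (mul b c) x) <-> (exists x, y = mul b x)) /\
     (forall y, (exists x, y = mul x (mul b c)) <-> (exists x, y = mul x c)))
  \/ (exists l : list A, forall x y, In (mul x y) l).

(* Main.v *)
Require Import Defs.
From Stdlib Require Import List ClassicalEpsilon.
From Stdlib Require Import Classical FinFun Lia Arith FunctionalExtensionality.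

Section Help.
Variable (A : Type) (mul : A -> A -> A).
Hypothesis assoc : forall x y z : A, mul x (mul y z) = mul (mul x y) z.

Fixpoint pw (x : A) (n : nat) : A :=
  match n with O => x | S k => mul x (pw x k) end.

Lemma pw_add x a b : mul (pw x a) (pw x b) = pw x (S (a + b)).
Proof.
  induction a; simpl; auto. rewrite <- assoc, IHa. reflexivity.
Qed.

Lemma pw_succ_r x n : pw x (S n) = mul (pw x n) x.
Proof.
  induction n; simpl; auto. simpl in IHn. rewrite IHn at 1. rewrite assoc. reflexivity.
Qed.

Lemma pigeon (x : A) (l : list A) (Hl : forall p q, In (mul p q) l) :
  exists i j, i < j /\ pw x i = pw x j.
Proof.
  apply NNPP; intro H.
  set (f := fun n => pw x (S n)).
  assert (Hi : Injective f).
  { intros i j Hij. unfold f in Hij.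
    destruct (Nat.lt_total i j) as [h|[h|h]]; auto; exfalso; apply H.
    - exists (S i), (S j). split; [lia|auto].
    - exists (S j), (S i). split; [lia|auto]. }
  assert (Hn := @Injective_map_NoDup _ _ f (seq 0 (S (length l))) Hi (seq_NoDup _ _)).
  assert (Hinc : incl (map f (seq 0 (S (length l)))) l).
  { intros y Hy. apply in_map_iff in Hy. destruct Hy as [n [<- _]].
    unfold f; simpl. apply Hl. }
  pose proof (NoDup_incl_length Hn Hinc) as Hlen.
  rewrite length_map, length_seq in Hlen. lia.
Qed.

Lemma idem (x : A) (l : list A) (Hl : forall p q, In (mul p q) l) :
  exists n, mul (pw x n) (pw x n) = pw x n.
Proof.
  destruct (pigeon x l Hl) as [i [j [Hij E]]].
  assert (R : forall r, pw x (i + r) = pw x (j + r)).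
  { induction r. rewrite !Nat.add_0_r; auto.
    replace (i + S r) with (S (i + r)) by lia.
    replace (j + S r) with (S (j + r)) by lia.
    rewrite !pw_succ_r, IHr. reflexivity. }
  set (p := j - i).
  assert (C : forall c r, pw x (i + r) = pw x (i + r + c * p)).
  { induction c; intro r. rewrite Nat.add_0_r; auto.
    replace (i + r + S c * p) with (j + (r + c * p)) by (unfold p; simpl; lia).
    rewrite <- R. rewrite (IHc r). f_equal. lia. }
  set (m := S i * p).
  assert (Hm : m >= S i) by (unfold m, p; nia).
  exists (m - 1). rewrite pw_add.
  replace (pw x (m - 1)) with (pw x (i + (m - 1 - i))) by (f_equal; lia).
  rewrite (C (S i) (m - 1 - i)). f_equal. fold m. lia.
Qed.

End Help.

Lemma ex_of_unique {T : Type} (P : T -> Prop) : (exists! x, P x) -> exists x, P x.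
Proof. intros [x [H _]]. exists x; exact H. Qed.

Section Back.
Variable (A : Type) (mul : A -> A -> A).

Lemma peval_ext (e1 e2 : nat -> A) t :
  (forall n, e1 n = e2 n) -> peval mul e1 t = peval mul e2 t.
Proof.
  intro H; induction t; simpl; auto. rewrite IHt1, IHt2; auto.
Qed.

Fixpoint tmap (phi : A -> A) (t : pterm A) : pterm A :=
  match t with
  | PVar n => PVar n
  | PConst c => PConst (phi c)
  | PMul t1 t2 => PMul (tmap phi t1) (tmap phi t2)
  end.
End Back.

Theorem mainTheorem17 (A : Type) (mul : A -> A -> A)
  (assoc : forall x y z : A, mul x (mul y z) = mul (mul x y) z)
  (Hstar : condition_star mul) :
  abelian_in (fun _ : A => True) mul <->
  exists B : A -> Prop,
    subsemigroup mul B /\ inflation_of mul B /\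
    semisimple_in mul B /\ abelian_in B mul.
Proof.
  split.
  - intro Hab.
    assert (F1 : forall u a b v, mul u a = mul u b -> mul v a = mul v b).
    { intros u a b v H.
      exact (Hab (PMul (PVar 0) (PVar 1)) (conj I I) u v (fun _ => a) (fun _ => b)
               I I (fun _ => I) (fun _ => I) H). }
    assert (F2 : forall u a b v, mul a u = mul b u -> mul a v = mul b v).
    { intros u a b v H.
      exact (Hab (PMul (PVar 1) (PVar 0)) (conj I I) u v (fun _ => a) (fun _ => b)
               I I (fun _ => I) (fun _ => I) H). }
    set (B := fun x => exists p q, x = mul p q).
    assert (LR : forall x, exists b, B b /\ (forall z, mul z x = mul z b) /\
                                     (forall z, mul x z = mul b z)).
    { intro x. destruct Hstar as [H1|[l Hl]].
      - destruct (H1 x x) as [Ha Hb].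
        destruct (proj2 (Ha (mul x x)) (ex_intro _ x eq_refl)) as [y1 Hy1].
        destruct (proj2 (Hb (mul x x)) (ex_intro _ x eq_refl)) as [y2 Hy2].
        assert (L : forall v, mul v x = mul v (mul x y1)).
        { intro v. apply (F1 x). rewrite assoc. exact Hy1. }
        assert (R : forall v, mul x v = mul (mul y2 x) v).
        { intro v. apply (F2 x). rewrite <- assoc. exact Hy2. }
        assert (E : mul x y1 = mul y2 x).
        { rewrite R, <- assoc, <- L. reflexivity. }
        exists (mul x y1). split; [exists x, y1; auto|]. split; auto.
        intro z. rewrite E. auto.
      - destruct (idem A mul assoc x l Hl) as [n Hn].
        set (e := pw A mul x n) in *.
        assert (Cm : mul x e = mul e x).
        { unfold e. rewrite <- pw_succ_r by auto. reflexivity. }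
        exists (mul x e). split; [exists x, e; auto|]. split.
        + intro z. apply (F1 e). rewrite Cm, assoc, Hn. reflexivity.
        + intro z. apply (F2 e). rewrite <- assoc, Hn. reflexivity. }
    assert (LS : forall a b, B a -> exists s t, B s /\ B t /\ a = mul (mul s b) t).
    { intros a b [a1 [a2 ->]]. destruct Hstar as [H1|[l Hl]].
      - destruct (H1 b a2) as [_ Hb].
        destruct (proj2 (Hb (mul a1 a2)) (ex_intro _ a1 eq_refl)) as [x Hx].
        destruct (LR x) as [x' [Bx' [_ Rx]]].
        destruct (LR a2) as [a' [Ba' [La _]]].
        exists x', a'. split; auto. split; auto.
        rewrite Hx, assoc, Rx, La. reflexivity.
      - destruct (idem A mul assoc b l Hl) as [n Hn].
        set (e := pw A mul b n) in *.
        assert (W : exists w, e = mul b w).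
        { destruct n as [|n']. exists e. rewrite <- Hn at 1. unfold e; reflexivity.
          exists (pw A mul b n'). reflexivity. }
        destruct W as [w Hw].
        assert (K : forall v, mul a1 v = mul (mul a1 e) v).
        { intro v. apply (F2 e). rewrite <- assoc, Hn. reflexivity. }
        exists (mul a1 e), (mul w a2). split; [exists a1, e; auto|].
        split; [exists w, a2; auto|].
        rewrite K. rewrite <- Hn at 1. rewrite Hw at 2.
        rewrite !assoc. reflexivity. }
    assert (JB : forall a y, B a -> (Jideal mul B a y <-> B y)).
    { intros a y Ba. split; [intros [H _]; auto|].
      intro By. split; [exact By|]. destruct (LS y a By) as [s [t [Bs [Bt E]]]].
      right; right; right. exists s, t. auto. }
    exists B. split; [|split; [|split]].
    + intros x y _ _. exists x, y; auto.
    + set (r := fun x => proj1_sig (constructive_indefinite_description _ (LR x))).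
      assert (Hr : forall x, B (r x) /\ (forall z, mul z x = mul z (r x)) /\
                                     (forall z, mul x z = mul (r x) z)).
      { intro x. exact (proj2_sig (constructive_indefinite_description _ (LR x))). }
      exists (fun b x => B b /\ (x = b \/ (~ B x /\ b = r x))).
      split; [intros b x [H _]; exact H|]. split; [|split].
      * intro x. destruct (classic (B x)) as [Bx|nBx].
        -- exists x. split; [split; [exact Bx|split; [exact Bx|left; reflexivity]]|].
           intros b' [Bb' [_ [E|[C _]]]]; [auto|contradiction].
        -- exists (r x). split; [split; [apply Hr|split; [apply Hr|right; auto]]|].
           intros b' [Bb' [_ [E|[_ E]]]]; [subst; contradiction|auto].
      * intros b Bb. split; auto.
      * intros a b x y Ba Bb [_ Hx] [_ Hy].
        assert (Rx : forall z, mul x z = mul a z).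
        { destruct Hx as [->|[_ ->]]; [auto|apply Hr]. }
        assert (Ly : forall z, mul z y = mul z b).
        { destruct Hy as [->|[_ ->]]; [auto|apply Hr]. }
        rewrite Rx, Ly. reflexivity.
    + intros a Ba. split.
      * intros _. left. intros K [[k Kk] [KP Kcl]] x Jx.
        apply (JB a x Ba) in Jx. pose proof (KP k Kk) as Bk. apply (JB a k Ba) in Bk.
        destruct (LS x k Jx) as [s [t [Bs [Bt E]]]]. rewrite E.
        apply (Kcl t (mul s k)); [apply JB; auto|].
        apply (Kcl s k); [apply JB; auto|auto].
      * intros [x [Jx NJ]]. exfalso. apply NJ.
        assert (Bx : B x) by exact (proj1 (JB a x Ba) Jx).
        split; auto. intro y. rewrite (JB a y Ba), (JB x y Bx). tauto.
    + intros t Ht u v c d _ _ _ _ H.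
      refine (Hab t _ u v c d I I (fun _ => I) (fun _ => I) H).
      clear -Ht. induction t; simpl in *; tauto.
  - intros [B [Hsub [[X [HX1 [HX2 [HX3 HX4]]]] [_ HabB]]]].
    set (phi := fun x => proj1_sig (constructive_indefinite_description _ (ex_of_unique _ (HX2 x)))).
    assert (Hphi : forall x, B (phi x) /\ X (phi x) x).
    { intro x. exact (proj2_sig (constructive_indefinite_description _ (ex_of_unique _ (HX2 x)))). }
    assert (Hfix : forall b, B b -> phi b = b).
    { intros b Bb. destruct (HX2 b) as [b0 [_ U]].
      rewrite <- (U (phi b) (Hphi b)). apply U. split; auto. }
    assert (Hmul : forall x y, mul x y = mul (phi x) (phi y)).
    { intros x y. apply HX4; apply Hphi. }
    assert (LB : forall t e, (forall n, B (e n)) -> B (peval mul e (tmap A phi t))).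
    { induction t; intros e He; simpl; auto. apply Hphi. }
    assert (L3 : forall t e, phi (peval mul e t) = peval mul (fun n => phi (e n)) (tmap A phi t)).
    { induction t; intro e; simpl; auto.
      rewrite Hmul, IHt1, IHt2. apply Hfix. apply Hsub; apply LB; intro; apply Hphi. }
    assert (LC : forall t, consts_in B (tmap A phi t)).
    { induction t; simpl; auto. apply Hphi. }
    assert (L2 : forall t1 t2 e, peval mul e (PMul t1 t2) =
                   peval mul (fun n => phi (e n)) (tmap A phi (PMul t1 t2))).
    { intros t1 t2 e. simpl. rewrite Hmul, L3, L3. reflexivity. }
    assert (SC : forall u c, (fun n => phi (scons u c n)) = scons (phi u) (fun n => phi (c n))).
    { intros u c. apply functional_extensionality. intros [|n]; reflexivity. }
    intros t _ u v c d _ _ _ _ H.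
    destruct t as [[|n]|c0|t1 t2]; [simpl in *; auto..|].
    rewrite (L2 t1 t2 (scons u c)), (L2 t1 t2 (scons u d)), !SC in H.
    rewrite (L2 t1 t2 (scons v c)), (L2 t1 t2 (scons v d)), !SC.
    exact (HabB (PMul (tmap A phi t1) (tmap A phi t2)) (conj (LC t1) (LC t2))
             (phi u) (phi v) _ _ (proj1 (Hphi u)) (proj1 (Hphi v))
             (fun n => proj1 (Hphi (c n))) (fun n => proj1 (Hphi (d n))) H).
Qed.
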